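(* Let $N\ge 1$ and let $D_1^N,\ldots,D_N^N:\mathbb{R}_+^N\to\mathbb{R}$ be demand functions satisfying assumptions (A1) and (A2) below. Fix a price vector $p=(p_1,\ldots,p_N)\in\mathbb{R}_+^N$ with $p_1\le p_2\le\cdots\le p_N$. Then $$D_1^N(p_1,\ldots,p_N)\ \ge\ D_2^N(p_1,\ldots,p_N)\ \ge\ \cdots\ \ge\ D_N^N(p_1,\ldots,p_N).$$
   Context: (A1) Each $D_i^N$ is smooth in all variables, $D_N^N(0,\ldots,0)>0$, $\partial D_i^N/\partial p_i<0$, and $\partial D_i^N/\partial p_j>0$ for $j\neq i$. (A2) Exchangeability: for all $i,j\in\{1,\ldots,N\}$ and all $p$, $D_i^N(p_1,\ldots,p_i,\ldots,p_j,\ldots,p_N)=D_j^N(p_1,\ldots,p_j,\ldots,p_i,\ldots,p_N)$ (the right-hand side has the $i$-th and $j$-th prices swapped); consequently $D_i^N$ is invariant under permutations of the prices $p_k$, $k\ne i$. *)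

(* Defs.v *)
From HB Require Import structures.
From mathcomp Require Import all_boot all_order all_algebra all_fingroup.
From mathcomp Require Import all_classical all_reals all_analysis.
Set Implicit Arguments. Unset Strict Implicit. Unset Printing Implicit Defensive.
Import Order.TTheory GRing.Theory Num.Theory.
Import numFieldNormedType.Exports.
Local Open Scope ring_scope.
Local Open Scope classical_set_scope.

Section Defs.
Variables (R : realType) (N : nat).
Local Notation V := 'rV[R]_N.

Fixpoint iter_dir (vs : seq V) (f : V -> R) : V -> R :=
  match vs with
  | [::] => f
  | v :: vs' => fun x => 'D_v (iter_dir vs' f) x
  end.

Definition orthant : set V := [set p | forall k : 'I_N, 0 <= p 0 k].

Definition smooth_on (A : set V) (f : V -> R) : Prop :=
  exists U : set V, [/\ open U, A `<=` U &
    forall (vs : seq V) (v : V) (x : V), U x -> derivable (iter_dir vs f) x v].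

Definition ev (k : 'I_N) : V := delta_mx 0 k.

Definition partial (k : 'I_N) (f : V -> R) (p : V) : R := 'D_(ev k) f p.

Definition swap_prices (i j : 'I_N) (p : V) : V := \row_k p 0 (tperm i j k).

End Defs.
Arguments orthant {R N}.

(* Main.v *)
Require Import Defs.
From HB Require Import structures.
From mathcomp Require Import all_boot all_order all_algebra all_fingroup.
From mathcomp Require Import all_classical all_reals all_analysis.
Import Order.TTheory GRing.Theory Num.Theory.
Import numFieldNormedType.Exports.
Local Open Scope ring_scope.
Local Open Scope classical_set_scope.

Section Seg.
Variables (R : realType) (m : nat).
Local Notation V := 'rV[R]_m.

Lemma quot_eq (f : V -> R) (x v : V) (t : R) :
  (fun h : R => h^-1 *: (((fun s : R => f (s *: v + x)) \o shift t) (h *: 1) - f (t *: v + x)))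
  = (fun h : R => h^-1 *: ((f \o shift (t *: v + x)) (h *: v) - f (t *: v + x))).
Proof.
apply: funext => h /=; congr (_ *: (f _ - _)).
rewrite /shift /= scalerDl addrA; congr (_ *: _ + _ + _); exact: mulr1.
Qed.

Lemma seg_derivable (f : V -> R) x v t :
  derivable f (t *: v + x) v -> derivable (fun s : R => f (s *: v + x)) t 1.
Proof. by rewrite /derivable quot_eq. Qed.

Lemma seg_derive (f : V -> R) x v t :
  (fun s : R => f (s *: v + x))^`() t = 'D_v f (t *: v + x).
Proof. by rewrite derive1E /derive quot_eq. Qed.

Lemma seg_nincr (f : V -> R) x v c : 0 <= c ->
  (forall t, 0 <= t <= c -> derivable f (t *: v + x) v) ->
  (forall t, 0 < t < c -> 'D_v f (t *: v + x) <= 0) ->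
  f (c *: v + x) <= f x.
Proof.
move=> c0 dv dn.
have := @ler0_derive1_nincr R (fun s : R => f (s *: v + x)) 0 c.
move=> /(_ _ _ _ 0 c (lexx _) c0 (lexx _)); rewrite scale0r add0r; apply.
- move=> t; rewrite in_itv /= => /andP[t0 tc]; apply: seg_derivable; apply: dv.
  by rewrite !ltW.
- by move=> t; rewrite in_itv /= => /andP[t0 tc]; rewrite seg_derive dn ?t0.
- apply: derivable_within_continuous => t; rewrite in_itv /= => /andP[t0 tc].
  by apply: seg_derivable; apply: dv; rewrite t0 tc.
Qed.

Lemma seg_ndecr (f : V -> R) x v c : 0 <= c ->
  (forall t, 0 <= t <= c -> derivable f (t *: v + x) v) ->
  (forall t, 0 < t < c -> 0 <= 'D_v f (t *: v + x)) ->
  f x <= f (c *: v + x).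
Proof.
move=> c0 dv dn.
have := @ger0_derive1_ndecr R (fun s : R => f (s *: v + x)) 0 c.
move=> /(_ _ _ _ 0 c (lexx _) c0 (lexx _)); rewrite scale0r add0r; apply.
- move=> t; rewrite in_itv /= => /andP[t0 tc]; apply: seg_derivable; apply: dv.
  by rewrite !ltW.
- by move=> t; rewrite in_itv /= => /andP[t0 tc]; rewrite seg_derive dn ?t0.
- apply: derivable_within_continuous => t; rewrite in_itv /= => /andP[t0 tc].
  by apply: seg_derivable; apply: dv; rewrite t0 tc.
Qed.

Lemma ev_entry (k l : 'I_m) (t : R) (y : V) :
  (t *: ev R k + y) 0 l = t * (k == l)%:R + y 0 l.
Proof. by rewrite /ev !mxE eqxx /= eq_sym. Qed.

End Seg.

Theorem proposition2p1 (R : realType) (n : nat)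
  (D : 'I_n.+1 -> 'rV[R]_n.+1 -> R)
  (* (A1) *)
  (Hsmooth : forall i, smooth_on (orthant) (D i))
  (Hpos : 0 < D ord_max (0 : 'rV[R]_n.+1))
  (Hown : forall i p, orthant p -> partial i (D i) p < 0)
  (Hcross : forall i j p, orthant p -> j != i -> 0 < partial j (D i) p)
  (* (A2) *)
  (Hexch : forall i j p, orthant p -> D i p = D j (swap_prices i j p))
  (p : 'rV[R]_n.+1) (Hp : orthant p)
  (Hsorted : forall i j : 'I_n.+1, (val j = (val i).+1)%N -> p 0 i <= p 0 j) :
  forall i j : 'I_n.+1, (val j = (val i).+1)%N -> D j p <= D i p.
Proof.
move=> i j hij.
have ji : j != i by apply/eqP => E; move: hij; rewrite E => /eqP; rewrite eqn_leq ltnn andbF.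
have le := Hsorted i j hij.
set c := p 0 j - p 0 i.
have c0 : 0 <= c by rewrite subr_ge0.
set q := swap_prices j i p.
have Hq : orthant q by move=> k; rewrite /q /swap_prices mxE; apply: Hp.
have orthS (y : 'rV[R]_n.+1) k t : orthant y -> 0 <= t -> orthant (t *: ev R k + y).
  move=> hy t0 l; rewrite ev_entry; apply: addr_ge0 => //.
  by apply: mulr_ge0 => //; rewrite ler0n.
have [U [_ sU dU]] := Hsmooth i.
have der y k t : orthant y -> 0 <= t -> derivable (D i) (t *: ev R k + y) (ev R k).
  by move=> hy t0; apply: (dU [::]); apply: sU; apply: orthS.
have E : c *: ev R j + q = c *: ev R i + p.
  apply/rowP => k; rewrite !ev_entry /q /swap_prices mxE.
  have [->|ki] := eqVneq k i.
    by rewrite tpermR (negbTE ji) mulr0 mulr1 add0r /c subrK.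
  have [->|kj] := eqVneq k j.
    by rewrite tpermL mulr0 mulr1 add0r /c subrK.
  by rewrite tpermD 1?eq_sym.
rewrite (Hexch j i p Hp) -/q.
apply: (@le_trans _ _ (D i (c *: ev R j + q))).
  apply: seg_ndecr => // t /andP[t0 tc]; first exact: der.
  apply: ltW; apply: Hcross => //; apply: orthS => //; exact: ltW.
rewrite E; apply: seg_nincr => // t /andP[t0 tc]; first exact: der.
apply: ltW; apply: Hown; apply: orthS => //; exact: ltW.
Qed.
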